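(* Let $q$ be odd and let $C$ be an $[n,k]$ code over $\mathbb{F}_q$ with $C^\perp\neq\{\bm 0\}$ and $d(C^\perp)>3$. Then $\gamma(C)\le k-d(C^\perp)+2$.
   Context: An $[n,k]$ code over $\mathbb{F}_q$ is a $k$-dimensional subspace $C\subseteq\mathbb{F}_q^n$; write $E=\{1,\dots,n\}$. For $\bm{x}\in\mathbb{F}_q^n$, $\mathrm{supp}(\bm{x})=\{i: x_i\neq 0\}$ and the weight is $|\mathrm{supp}(\bm{x})|$; for $B\subseteq\mathbb{F}_q^n$, $\mathrm{Supp}(B)=\bigcup_{\bm{x}\in B}\mathrm{supp}(\bm{x})$. $C^\perp$ is the dual code with respect to the standard inner product and $d(C^\perp)$ is the minimum weight of a nonzero codeword of $C^\perp$. The covering dimension is $\gamma(C)=\infty$ if $\mathrm{Supp}(C)\neq E$, and otherwise $\gamma(C)$ is the least positive integer $r$ such that $C$ has an $r$-dimensional subspace $D$ with $\mathrm{Supp}(D)=E$. *)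

(* Defs.v *)
From HB Require Import structures.
From mathcomp Require Import all_boot all_order all_algebra all_field.
Set Implicit Arguments. Unset Strict Implicit. Unset Printing Implicit Defensive.
Import GRing.Theory.
Local Open Scope ring_scope.

(* Codes of length n over a finite field F are subspaces C : {vspace 'rV[F]_n};
   coordinates E = {1..n} are indexed by 'I_n. *)

Section Codes.
Variables (F : finFieldType) (n : nat).

Definition supp (x : 'rV[F]_n) : {set 'I_n} := [set i | x 0 i != 0].

Definition wt (x : 'rV[F]_n) : nat := #|supp x|.

Definition Supp (B : {pred 'rV[F]_n}) : {set 'I_n} :=
  \bigcup_(x | x \in B) supp x.

Definition dotp (x y : 'rV[F]_n) : F := \sum_(i < n) x 0 i * y 0 i.

Definition dual (C : {vspace 'rV[F]_n}) : {set 'rV[F]_n} :=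
  [set y | [forall x, (x \in C) ==> (dotp x y == 0)]].

(* minimum weight of a nonzero codeword of B (meaningful when B has a nonzero
   vector; every weight is <= n so the default n is harmless then) *)
Definition min_dist (B : {set 'rV[F]_n}) : nat :=
  \big[minn/n]_(y | (y \in B) && (y != 0)) wt y.

(* gamma(C) = r (finite): Supp(C) = E and r is the least positive integer such
   that some r-dimensional subspace D of C has Supp(D) = E.  gamma(C) = infinity
   corresponds to no r satisfying this predicate. *)
Definition covering_dim (C : {vspace 'rV[F]_n}) (r : nat) : Prop :=
  [/\ Supp (fun x => x \in C) = [set: 'I_n],
      (0 < r)%N,
      exists D : {vspace 'rV[F]_n},
        [/\ (D <= C)%VS, \dim D = r & Supp (fun x => x \in D) = [set: 'I_n]]
    & forall D : {vspace 'rV[F]_n}, (D <= C)%VS -> (0 < \dim D)%N ->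
        Supp (fun x => x \in D) = [set: 'I_n] -> (r <= \dim D)%N].

End Codes.

(* Main.v *)
Require Import Defs.
From HB Require Import structures.
From mathcomp Require Import all_boot all_order all_algebra all_field.
From mathcomp Require Import zify ring.
From Stdlib Require Import Classical.
Set Implicit Arguments. Unset Strict Implicit. Unset Printing Implicit Defensive.
Import GRing.Theory.
Local Open Scope ring_scope.

Lemma key_lemma (F : finFieldType) (T : finType) (m : nat) (l0 l1 l2 : 'I_m)
  (x0 : F) (I : {set T}) (c : T -> 'I_m -> F) :
  l0 != l1 -> l0 != l2 -> l1 != l2 -> x0 != 0 -> x0 != 1 ->
  (forall i, i \in I -> forall l, c i l != 0) ->
  {in I &, injective (fun i => c i l1 / c i l0)} ->
  exists lam : 'I_m -> F, (forall l, lam l != 0) /\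
    (forall i, i \in I -> \sum_l c i l * lam l != 0).
Proof.
move=> n01 n02 n12 x00 x01 cnz rinj.
have [I0|[i0 i0I]] := set_0Vmem I.
  by exists (fun _ => 1) => //; split=> [l|i]; rewrite ?oner_eq0 // I0 inE.
pose s := \sum_(l | (l != l0) && (l != l1) && (l != l2)) c i0 l.
pose t := if c i0 l2 + s != 0 then 1 else x0.
pose tau l := if l == l2 then t else 1.
have taunz l : tau l != 0.
  by rewrite /tau /t; case: ifP => _; [case: ifP => _|]; rewrite ?oner_eq0.
pose Tf i := \sum_(l | (l != l0) && (l != l1)) c i l * tau l.
have Ti0 : Tf i0 != 0.
  rewrite /Tf (bigD1 l2) /=; last by rewrite eq_sym n02 eq_sym n12.
  rewrite {1}/tau eqxx.
  have -> : \sum_(l | (l != l0) && (l != l1) && (l != l2)) c i0 l * tau l = s.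
    by apply: eq_bigr => l /andP[_ ltn2]; rewrite /tau (negbTE ltn2) mulr1.
  rewrite /t; case: ifP; first by rewrite mulr1 => ->.
  move/negbFE/eqP => h.
  have -> : s = - c i0 l2 by rewrite -[s](addKr (c i0 l2)) h addr0.
  have -> : c i0 l2 * x0 + - c i0 l2 = c i0 l2 * (x0 - 1) by rewrite mulrBr mulr1.
  by rewrite mulf_neq0 ?cnz // subr_eq0.
pose mu := - Tf i0 / c i0 l1.
have munz : mu != 0 by rewrite mulf_neq0 ?oppr_eq0 ?invr_eq0 ?cnz.
pose bad i := - (c i l1 * mu + Tf i) / c i l0.
have badi0 : bad i0 = 0.
  by rewrite /bad /mu mulrCA divff ?cnz // mulr1 addNr oppr0 mul0r.
have cardI : (#|I| < #|F|)%N.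
  pose r i := c i l1 / c i l0.
  have : r @: I \subset ~: [set 0].
    apply/subsetP => _ /imsetP[i iI ->]; rewrite !inE /r.
    by rewrite mulf_neq0 ?invr_eq0 ?cnz.
  move/subset_leq_card; rewrite card_in_imset // cardsC1 => h.
  by apply: leq_ltn_trans h _; rewrite prednK // (cardD1 0) inE.
have [a aN] : exists a, a \notin bad @: I.
  apply/existsP; rewrite -negb_forall; apply/negP => /forallP h.
  have : [set: F] \subset bad @: I by apply/subsetP => x _; apply: h.
  move/subset_leq_card; rewrite cardsT => h2.
  by move: (leq_trans h2 (leq_imset_card _ _)); rewrite leqNgt cardI.
have anz : a != 0.
  by apply: contraNneq aN => ->; rewrite -badi0 imset_f.
exists (fun l => if l == l0 then a else if l == l1 then mu else tau l); split.
  by move=> l; case: ifP => _; [|case: ifP => _].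
move=> i iI.
rewrite (bigD1 l0) //= eqxx (bigD1 l1) /=; last by rewrite eq_sym n01.
rewrite [l1 == l0]eq_sym (negbTE n01) eqxx.
have -> : \sum_(l | (l != l0) && (l != l1))
   c i l * (if l == l0 then a else if l == l1 then mu else tau l) = Tf i.
  by apply: eq_bigr => l /andP[/negbTE -> /negbTE ->].
apply: contra aN => /eqP h; apply/imsetP; exists i => //.
rewrite /bad; apply: (mulfI (cnz i iI l0)); rewrite mulrCA mulfV ?cnz // mulr1.
by apply/eqP; rewrite -addr_eq0 h.
Qed.

Definition Pm (F : finFieldType) n m (hmn : (m <= n)%N) : 'M[F]_(n, m) :=
  \matrix_(i, l) (i == widen_ord hmn l)%:R.

Definition Sw n m (hmn : (m <= n)%N) : {set 'I_n} :=
  [set widen_ord hmn l | l in 'I_m].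

Lemma widen_inj n m (hmn : (m <= n)%N) : injective (widen_ord hmn).
Proof. by move=> a b /(congr1 val) /= /val_inj. Qed.

Lemma Pm_out (F : finFieldType) n m (hmn : (m <= n)%N) i l :
  i \notin Sw hmn -> Pm F hmn i l = 0.
Proof.
move=> iS; rewrite mxE; case: eqP => // e; case/negP: iS; rewrite e.
exact: imset_f.
Qed.

Lemma sum_Pm (F : finFieldType) n m (hmn : (m <= n)%N) l0 (a : 'I_m -> F) :
  \sum_l Pm F hmn (widen_ord hmn l0) l * a l = a l0.
Proof.
rewrite (bigD1 l0) //= mxE eqxx mul1r big1 ?addr0 // => l ll0.
rewrite mxE; case: eqP => [/widen_inj e|]; last by rewrite mul0r.
by rewrite e eqxx in ll0.
Qed.

Lemma mulPm (F : finFieldType) n m (hmn : (m <= n)%N) (x : 'rV[F]_n) l :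
  (x *m Pm F hmn) 0 l = x 0 (widen_ord hmn l).
Proof.
rewrite mxE (bigD1 (widen_ord hmn l)) //= mxE eqxx mulr1 big1 ?addr0 // => i il.
by rewrite mxE (negbTE il) mulr0.
Qed.

Lemma mulPmT (F : finFieldType) n m (hmn : (m <= n)%N) (u : 'rV[F]_m) i :
  (u *m (Pm F hmn)^T) 0 i = \sum_l Pm F hmn i l * u 0 l.
Proof. by rewrite mxE; apply: eq_bigr => l _; rewrite mxE mulrC. Qed.

Lemma dotpE (F : finFieldType) n (x y : 'rV[F]_n) :
  dotp x y = \sum_i x 0 i * y 0 i.
Proof. by []. Qed.

Lemma dual_memP (F : finFieldType) n (C : {vspace 'rV[F]_n}) y :
  reflect (forall x, x \in C -> dotp x y = 0) (y \in dual C).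
Proof.
rewrite inE; apply: (iffP forallP) => h x.
  by move=> xC; move: (h x); rewrite xC => /eqP.
by apply/implyP => /h ->.
Qed.

Lemma dual_lin (F : finFieldType) n (C : {vspace 'rV[F]_n}) y y' k :
  y \in dual C -> y' \in dual C -> y - k *: y' \in dual C.
Proof.
move=> /dual_memP h /dual_memP h'; apply/dual_memP => x xC.
have : dotp x y - k * dotp x y' = 0 by rewrite h ?h' // mulr0 subr0.
move=> <-; rewrite /dotp mulr_sumr -sumrB; apply: eq_bigr => i _.
by rewrite !mxE mulrBr mulrCA.
Qed.

Lemma small_zero (F : finFieldType) n m (C : {vspace 'rV[F]_n})
  (hd : forall y, y \in dual C -> y != 0 -> (m < wt y)%N)
  (S : {set 'I_n}) z :
  z \in dual C -> (forall j, j \notin S -> z 0 j = 0) -> (#|S| <= m)%N -> z = 0.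
Proof.
move=> zd zS Sm; apply/eqP; apply/negPn/negP => z0.
have := hd z zd z0; rewrite /wt => h.
have : (#|supp z| <= #|S|)%N.
  apply: subset_leq_card; apply/subsetP => j; rewrite inE.
  by apply: contraR => /zS ->; rewrite eqxx.
lia.
Qed.

Lemma card_Sw n m (hmn : (m <= n)%N) : (#|Sw hmn| <= m)%N.
Proof. by rewrite /Sw; apply: leq_trans (leq_imset_card _ _) _; rewrite card_ord. Qed.

Lemma surj (F : finFieldType) n m (C : {vspace 'rV[F]_n}) (hmn : (m <= n)%N)
  (hd : forall y, y \in dual C -> y != 0 -> (m < wt y)%N) :
  exists Q : 'M[F]_(m, n), (forall w : 'rV_m, w *m Q \in C) /\
    Q *m Pm F hmn = 1%:M.
Proof.
pose k := \dim C.
pose b := vbasis C.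
pose B : 'M[F]_(k, n) := \matrix_(j, i) (b`_j) 0 i.
have rowB j : row j B = b`_j by apply/rowP => i; rewrite !mxE.
have BC (a : 'rV_k) : a *m B \in C.
  rewrite mulmx_sum_row; apply: memv_suml => j _; apply: memvZ.
  by rewrite rowB; apply: vbasis_mem; apply: mem_nth; rewrite size_tuple.
have xB x : x \in C -> exists a : 'rV_k, x = a *m B.
  move=> xC; exists (\row_j coord b j x); rewrite mulmx_sum_row.
  rewrite {1}(coord_vbasis xC); apply: eq_bigr => j _; by rewrite rowB mxE.
pose G := B *m Pm F hmn.
have fullG : row_full G.
  apply/negPn/negP => nf.
  have rk : (\rank G < m)%N.
    by move: (rank_leq_col G) nf; rewrite /row_full; lia.
  pose K := kermx G^T.
  have K0 : K != 0.
    by rewrite -mxrank_eq0 mxrank_ker mxrank_tr; lia.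
  have [l ul] : exists l, row l K != 0.
    apply/existsP; rewrite -negb_forall; apply: contra K0 => /forallP h.
    by apply/eqP/row_matrixP => l'; rewrite row0; apply/eqP.
  pose u := row l K.
  have uG : u *m G^T = 0 by rewrite /u -row_mul mulmx_ker row0.
  pose y := u *m (Pm F hmn)^T.
  have yd : y \in dual C.
    apply/dual_memP => x /xB [a ->].
    have : (a *m B *m (y^T)) 0 0 = 0.
      have Gu : G *m u^T = 0 by rewrite -[G]trmxK -trmx_mul uG trmx0.
      by rewrite /y trmx_mul trmxK !mulmxA -(mulmxA a) -/G -mulmxA Gu mulmx0 mxE.
    move=> <-; rewrite /dotp mxE; apply: eq_bigr => i _; by rewrite !mxE.
  have : y = 0.
    apply: (small_zero hd yd (S := Sw hmn)); last exact: card_Sw.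
    by move=> j jS; rewrite mulPmT big1 // => l2 _; rewrite Pm_out // mul0r.
  move=> y0; case/negP: ul; apply/eqP/rowP => l'.
  have : y 0 (widen_ord hmn l') = 0 by rewrite y0 mxE.
  by move=> h; rewrite [RHS]mxE -h /y mulPmT sum_Pm.
have [R RG] := row_fullP fullG.
exists (R *m B); split.
  by move=> w; rewrite mulmxA; apply: BC.
by rewrite -mulmxA.
Qed.

Lemma dotp_row (F : finFieldType) n (x : 'rV[F]_n) (N : 'M[F]_n) j :
  dotp x (row j N) = (x *m N^T) 0 j.
Proof. by rewrite /dotp mxE; apply: eq_bigr => i _; rewrite !mxE. Qed.

Lemma construct (F : finFieldType) n m (C : {vspace 'rV[F]_n}) (hmn : (m <= n)%N)
  (hd : forall y, y \in dual C -> y != 0 -> (m < wt y)%N)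
  (h3 : (3 <= m)%N) (x0 : F) (x00 : x0 != 0) (x01 : x0 != 1) :
  exists D : {vspace 'rV[F]_n}, [/\ (D <= C)%VS, (\dim D + m <= \dim C + 1)%N
     & forall j, exists2 x, x \in D & x 0 j != 0].
Proof.
have [Q [QC QP]] := surj hmn hd.
pose P := Pm F hmn.
have {}QP : Q *m P = 1%:M by exact: QP.
pose f : 'Hom('rV[F]_n, 'rV[F]_m) := linfun (mulmxr P).
have fE x : f x = x *m P by rewrite lfunE.
pose K := (C :&: lker f)%VS.
have dimK : (\dim K + m <= \dim C)%N.
  rewrite -(limg_ker_dim f C) leq_add2l.
  have : (fullv <= f @: C)%VS.
    apply/subvP => w _; have -> : w = f (w *m Q) by rewrite fE -mulmxA QP mulmx1.
    exact: memv_img.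
  by move/dimvS; rewrite dimvf dim_matrix mul1r.
have memK x : x \in C -> x - x *m P *m Q \in K.
  move=> xC; rewrite memv_cap memvB ?QC // memv_ker fE mulmxBl -(mulmxA _ Q) QP.
  by rewrite mulmx1 subrr eqxx.
pose yv j := row j (1%:M - P *m Q)^T.
have yvE j i : yv j 0 i = (i == j)%:R - \sum_l P i l * Q l j.
  by rewrite !mxE.
have yvE_out j i : i \notin Sw hmn -> yv j 0 i = (i == j)%:R.
  by move=> iS; rewrite yvE big1 ?subr0 // => l _; rewrite Pm_out ?mul0r.
have yvE_in j l : j \notin Sw hmn -> yv j 0 (widen_ord hmn l) = - Q l j.
  move=> jS; rewrite yvE sum_Pm; case: eqP => [e|_]; last by rewrite sub0r.
  by case/negP: jS; rewrite -e imset_f.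
pose I := [set j | (j \notin Sw hmn) && [forall z, (z \in K) ==> (z 0 j == 0)]].
have yvd j : j \in I -> yv j \in dual C.
  rewrite inE => /andP[_ /forallP hz]; apply/dual_memP => x xC.
  rewrite dotp_row trmxK mulmxBr mulmx1 mulmxA.
  by apply/eqP; move: (hz (x - x *m P *m Q)); rewrite memK.
have cnz j : j \in I -> forall l, Q l j != 0.
  move=> jI l; apply/negP => /eqP q0.
  have jS : j \notin Sw hmn by move: jI; rewrite inE => /andP[].
  have y0 : yv j = 0.
    apply: (small_zero hd (yvd j jI) (S := j |: (Sw hmn :\ widen_ord hmn l))).
      move=> i; rewrite !inE negb_or negb_and negbK => /andP[ij /orP[/eqP ->|iS]].
        by rewrite yvE_in // q0 oppr0.
      by rewrite yvE_out // (negbTE ij).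
    rewrite cardsU1; have := cardsD1 (widen_ord hmn l) (Sw hmn).
    rewrite imset_f //; have := card_Sw hmn; rewrite /= => a b.
    by case: (j \notin _) => /=; [rewrite -b | rewrite add0n; apply: leq_trans a; rewrite b leq_addl].
  by move: (congr1 (fun v : 'rV[F]_n => v 0 j) y0) => /=; rewrite yvE_out // eqxx mxE => /eqP; rewrite oner_eq0.
have m0 : (0 < m)%N by lia.
have m1 : (1 < m)%N by lia.
have m2 : (2 < m)%N by lia.
pose l0 : 'I_m := Ordinal m0.
pose l1 : 'I_m := Ordinal m1.
pose l2 : 'I_m := Ordinal m2.
have Sw_w l' : widen_ord hmn l' \in Sw hmn by apply: imset_f.
have w01 : widen_ord hmn l1 != widen_ord hmn l0.
  by apply/negP => /eqP /(congr1 val).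
have rinj : {in I &, injective (fun j => Q l1 j / Q l0 j)}.
  move=> j j' jI j'I /= req; apply/eqP/negPn/negP => jj'.
  have jS : j \notin Sw hmn by move: jI; rewrite inE => /andP[].
  have j'S : j' \notin Sw hmn by move: j'I; rewrite inE => /andP[].
  pose k := Q l0 j / Q l0 j'.
  pose z := yv j - k *: yv j'.
  have zd : z \in dual C by apply: dual_lin; apply: yvd.
  have zE i : z 0 i = yv j 0 i - k * yv j' 0 i by rewrite !mxE.
  have z0 : z = 0.
    apply: (small_zero hd zd
      (S := [set j; j'] :|: (Sw hmn :\ widen_ord hmn l0 :\ widen_ord hmn l1))).
      move=> i; rewrite !inE negb_or => /andP[/norP[ij ij']].
      rewrite !negb_and !negbK => /or3P[/eqP ->|/eqP ->|iS].
      - rewrite zE !yvE_in //.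
        have -> : Q l1 j = Q l1 j' / Q l0 j' * Q l0 j.
          by rewrite -req divfK ?cnz.
        rewrite /k; ring.
      - by rewrite zE !yvE_in // /k mulrN divfK ?cnz // subrr.
      - by rewrite zE !yvE_out // (negbTE ij) (negbTE ij') mulr0 subrr.
    have c1 := cardsD1 (widen_ord hmn l0) (Sw hmn).
    have c2 := cardsD1 (widen_ord hmn l1) (Sw hmn :\ widen_ord hmn l0).
    rewrite Sw_w in c1; rewrite !inE Sw_w w01 /= in c2.
    have c3 := cardsU [set j; j'] (Sw hmn :\ widen_ord hmn l0 :\ widen_ord hmn l1).
    have c4 := cards2 j j'.
    have c5 := card_Sw hmn.
    move: c1 c2 c3 c4 c5.
    set A := #|Sw hmn|; set B := #|Sw hmn :\ widen_ord hmn l0|.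
    set X := #|_ :\ widen_ord hmn l1|.
    set U := #|_ :|: _|; set Y := #|[set j; j']|; set Z := #|_ :&: _|.
    by case: (j != j') => /= ha hb hc hd2 he; lia.
  by move: (congr1 (fun v : 'rV[F]_n => v 0 j) z0) => /=; rewrite zE !yvE_out // eqxx (negbTE jj') mulr0 subr0 mxE => /eqP; rewrite oner_eq0.
have n01 : l0 != l1 by [].
have n02 : l0 != l2 by [].
have n12 : l1 != l2 by [].
have [lam [lamnz lamI]] := key_lemma (c := fun j l => Q l j) n01 n02 n12 x00 x01 cnz rinj.
pose lamr : 'rV[F]_m := \row_l lam l.
pose xs := lamr *m Q.
have xsC : xs \in C by apply: QC.
have xsP : xs *m P = lamr by rewrite -mulmxA QP mulmx1.
have xsD : xs \in (K + <[xs]>)%VS by apply: (subvP (addvSr K _)); apply: memv_line.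
exists (K + <[xs]>)%VS; split.
- by rewrite subv_add capvSl -memvE xsC.
- have h1 := (dimv_add_leqif K <[xs]>).1.
  have h2 : (\dim <[xs]> <= 1)%N by rewrite dim_vline; case: (xs != 0).
  apply: (leq_trans (leq_add h1 (leqnn m))); rewrite addnAC; exact: leq_add dimK h2.
move=> j; case jS: (j \in Sw hmn).
  case/imsetP: jS => l _ ->; exists xs => //.
  by rewrite -mulPm -/P xsP mxE.
case: (boolP [exists z, (z \in K) && (z 0 j != 0)]).
  case/existsP => z /andP[zK zj]; exists z => //.
  exact: (subvP (addvSl K _)).
move=> nz; have jI : j \in I.
  rewrite inE jS /=; apply/forallP => z; apply/implyP => zK.
  by move: nz; rewrite negb_exists => /forallP/(_ z); rewrite zK /= negbK.
have xsj : xs 0 j = \sum_l Q l j * lam l.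
  by rewrite /xs mxE; apply: eq_bigr => l _; rewrite mxE mulrC.
by exists xs => //; rewrite xsj; apply: lamI.
Qed.

Lemma cover_exists (F : finFieldType) n (C : {vspace 'rV[F]_n}) N :
  forall D : {vspace 'rV[F]_n}, (D <= C)%VS -> \dim D = N -> (0 < N)%N ->
  Supp (fun x => x \in D) = [set: 'I_n] ->
  exists r, covering_dim C r /\ (r <= N)%N.
Proof.
elim/ltn_ind: N => N IH D DC dD N0 SD.
case: (classic (exists D' : {vspace 'rV[F]_n}, [/\ (D' <= C)%VS, (0 < \dim D')%N,
    Supp (fun x => x \in D') = [set: 'I_n] & (\dim D' < N)%N])).
  case=> D' [D'C D'0 SD' lt].
  have [r [cr rle]] := IH _ lt D' D'C erefl D'0 SD'.
  by exists r; split => //; apply: ltnW (leq_ltn_trans rle lt).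
move=> nex; exists N; split => //; split => //.
- apply/setP => i; rewrite in_setT; move: (in_setT i); rewrite -SD.
  case/bigcupP => x xD xi; apply/bigcupP; exists x => //.
  exact: (subvP DC).
- by exists D.
move=> D' D'C D'0 SD'; rewrite leqNgt; apply/negP => lt; apply: nex.
by exists D'.
Qed.

Lemma full_Supp (F : finFieldType) n (D : {vspace 'rV[F]_n}) :
  (forall j, exists2 x, x \in D & x 0 j != 0) ->
  Supp (fun x => x \in D) = [set: 'I_n].
Proof.
move=> h; apply/setP => j; rewrite in_setT; have [x xD xj] := h j.
by apply/bigcupP; exists x => //; rewrite inE.
Qed.

Lemma bigmin_le (T : eqType) (r : seq T) (P : pred T) (f : T -> nat) x0 y :
  y \in r -> P y -> (\big[minn/x0]_(z <- r | P z) f z <= f y)%N.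
Proof.
elim: r => // a r IH; rewrite inE big_cons => /orP[/eqP<-|yr] Py.
  by rewrite Py geq_minl.
by case: ifP => _; [rewrite geq_min IH ?orbT | exact: IH].
Qed.

Theorem mainTheorem10 (F : finFieldType) (n : nat) (C : {vspace 'rV[F]_n}) :
  odd #|F| ->
  (exists2 y, y \in dual C & y != 0) ->
  (3 < min_dist (dual C))%N ->
  exists r, covering_dim C r /\ (r + min_dist (dual C) <= \dim C + 2)%N.
Proof.
move=> oddF [y0 y0d y0nz] d3.
set d := min_dist (dual C) in d3 *.
have min_le y : y \in dual C -> y != 0 -> (d <= wt y)%N.
  move=> yd ynz; rewrite /d /min_dist; apply: bigmin_le.
    exact: mem_index_enum.
  by rewrite yd ynz.
pose m := d.-1.
have dm : d = m.+1 by rewrite /m prednK //; lia.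
have hd y : y \in dual C -> y != 0 -> (m < wt y)%N.
  by move=> yd ynz; rewrite -dm; apply: min_le.
have hmn : (m <= n)%N.
  apply: ltnW; apply: leq_trans (hd _ y0d y0nz) _.
  by rewrite /wt -[X in (_ <= X)%N]card_ord; apply: max_card.
have h3 : (3 <= m)%N by lia.
have [x0 [x00 x01]] : exists x0 : F, x0 != 0 /\ x0 != 1.
  have h2 : (2 <= #|F|)%N.
    have := subset_leq_card (subsetT [set (0:F); 1]).
    by rewrite cards2 eq_sym oner_neq0 cardsT.
  have : ~~ ([set: F] \subset [set 0; 1]).
    apply/negP => /subset_leq_card; rewrite cardsT cards2 eq_sym oner_neq0 => h.
    have e : #|F| = 2%N by apply/eqP; rewrite eqn_leq h h2.
    by move: oddF; rewrite e.
  case/subsetPn => x _; rewrite !inE negb_or => /andP[a b].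
  by exists x.
have [D [DC dD supD]] := construct hmn hd h3 x00 x01.
have n0 : (0 < n)%N by lia.
have D0 : (0 < \dim D)%N.
  have [x xD xj] := supD (Ordinal n0).
  rewrite lt0n dimv_eq0; apply/eqP => e; move: xD; rewrite e memv0 => /eqP x0e.
  by move: xj; rewrite x0e mxE eqxx.
have [r [cr rle]] := cover_exists DC erefl D0 (full_Supp supD).
exists r; split => //.
rewrite dm; lia.
Qed.
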